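(* Consider a finite-horizon POMDP $\mathcal{M}$ in which, alongside the interaction, beliefs $\bm{b}_1,\dots,\bm{b}_T\in\Delta(\mathcal{S})$ are computed, with $\bm{b}_t$ a deterministic function (not depending on the policy parameters) of the history $(o_1,a_1,\dots,a_{t-1},o_t)$ (e.g. exact Bayesian beliefs or beliefs from an approximate belief oracle). Define the Maximum Believed Entropy objective $$\tilde J(\pi)=\mathbb{E}_{\tau_{\mathcal{B}}\sim p^\pi}\,\mathbb{E}_{\tau_{\tilde{\mathcal{S}}}\sim p(\cdot\mid\tau_{\mathcal{B}})}\big[H(d(\tau_{\tilde{\mathcal{S}}}))\big],$$ where $\tau_{\mathcal{B}}=(\bm{b}_1,\dots,\bm{b}_T)$ and, given $\tau_{\mathcal{B}}$, the believed trajectory $\tau_{\tilde{\mathcal{S}}}=(\tilde s_1,\dots,\tilde s_T)$ has probability $p(\tau_{\tilde{\mathcal{S}}}\mid\tau_{\mathcal{B}})=\prod_{t=1}^T\bm{b}_t(\tilde s_t)$. (i) If $\{\pi_\theta\}_{\theta\in\Theta}$ is a family of policies with information set $\mathcal{I}$ such that $\theta\mapsto\pi_\theta(a\mid i)$ is differentiable and strictly positive for all $a,i$, then $$\nabla_\theta\tilde J(\pi_\theta)=\mathbb{E}_{\tau\sim p^{\pi_\theta}}\,\mathbb{E}_{\tau_{\tilde{\mathcal{S}}}\sim p(\cdot\mid\tau_{\mathcal{B}})}\Big[\Big(\sum_{t=1}^{T-1}\nabla_\theta\log\pi_\theta(a_t\mid i_t)\Big)H(d(\tau_{\tilde{\mathcal{S}}}))\Big].$$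 (ii) For two policies $\pi_1,\pi_2$ with information set $\mathcal{I}$, let $\mathcal{T}_{\mathcal{B}}(\pi_1,\pi_2)$ be the set of belief trajectories with positive probability under $p^{\pi_1}$ or $p^{\pi_2}$, let $\tau^\star_{\mathcal{B}}\in\arg\max_{\tau_{\mathcal{B}}\in\mathcal{T}_{\mathcal{B}}(\pi_1,\pi_2)}\mathbb{E}_{\tau_{\tilde{\mathcal{S}}}\sim p(\cdot\mid\tau_{\mathcal{B}})}H(d(\tau_{\tilde{\mathcal{S}}}))$ and $\bar H(\tau^\star_{\mathcal{B}})=\mathbb{E}_{\tau_{\tilde{\mathcal{S}}}\sim p(\cdot\mid\tau^\star_{\mathcal{B}})}H(d(\tau_{\tilde{\mathcal{S}}}))$. Then $$|\tilde J(\pi_1)-\tilde J(\pi_2)|\le T\,\bar H(\tau^\star_{\mathcal{B}})\,d^{TV}(\pi_1,\pi_2),$$ where $d^{TV}(\pi_1,\pi_2):=\sup_{i\in\mathcal{I}}d^{TV}(\pi_1(\cdot\mid i),\pi_2(\cdot\mid i))$.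
   Context: A finite-horizon POMDP $\mathcal{M}=(\mathcal{S},\mathcal{A},\mathcal{O},\mathbb{P},\mathbb{O},T,\mu)$ has finite state, action and observation sets, transition kernel $\mathbb{P}$, observation kernel $\mathbb{O}$, horizon $T$, initial distribution $\mu$. Under a policy $\pi:\mathcal{I}\to\Delta(\mathcal{A})$: $s_1\sim\mu$, $o_t\sim\mathbb{O}(\cdot\mid s_t)$, and for $t<T$, $a_t\sim\pi(\cdot\mid i_t)$, $s_{t+1}\sim\mathbb{P}(\cdot\mid s_t,a_t)$, with $i_t$ a deterministic function of $(o_1,a_1,\dots,a_{t-1},o_t)$; $p^\pi$ is the law of the joint trajectory $\tau$ (states, actions, observations, beliefs). For a sequence $x=(x_1,\dots,x_T)$ over a finite set, $d(x)$ is its empirical distribution $d_y(x)=\frac1T\sum_t\mathbf{1}\{x_t=y\}$, $H$ is Shannon entropy (natural log), and $d^{TV}(p,q)=\frac12\sum_x|p(x)-q(x)|$. *)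

(* Defs.v *)
From HB Require Import structures.
From mathcomp Require Import all_boot all_order all_algebra.
From mathcomp Require Import all_classical all_reals all_analysis.
Set Implicit Arguments. Unset Strict Implicit. Unset Printing Implicit Defensive.
Import Order.TTheory GRing.Theory Num.Theory.
Import numFieldNormedType.Exports.
Local Open Scope ring_scope.
Local Open Scope classical_set_scope.

Section POMDP.
Variable R : realType.

Definition is_dist (X : finType) (p : X -> R) : Prop :=
  (forall x, 0 <= p x) /\ \sum_(x : X) p x = 1.

Definition dTV (X : finType) (p q : X -> R) : R :=
  2^-1 * \sum_(x : X) `|p x - q x|.

Definition dTV_pol (I : Type) (A : finType) (pi1 pi2 : I -> A -> R) : R :=
  sup (range (fun i => dTV (pi1 i) (pi2 i))).

Definition entropy (X : finType) (p : X -> R) : R :=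
  - \sum_(x : X) (if p x == 0 then 0 else p x * ln (p x)).

(* Horizon T = n.+1; times are 'I_n.+1 (t = 1..T) and actions are taken at
   times 'I_n (t = 1..T-1). *)
Variables (S A O : finType) (n : nat).

Notation states := {ffun 'I_n.+1 -> S}.
Notation obss := {ffun 'I_n.+1 -> O}.
Notation acts := {ffun 'I_n -> A}.

Definition empirical (x : states) (y : S) : R :=
  #|[set t | x t == y]|%:R / n.+1%:R.

(* time t as an index of 'I_n.+1, and time t+1 *)
Definition tcur (t : 'I_n) : 'I_n.+1 := widen_ord (leqnSn n) t.
Definition tnext (t : 'I_n) : 'I_n.+1 := lift ord0 t.

Definition causal_info (I : Type) (info : 'I_n -> obss -> acts -> I) : Prop :=
  forall (t : 'I_n) (os os' : obss) (as_ as' : acts),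
    (forall u : 'I_n.+1, (u <= t)%N -> os u = os' u) ->
    (forall u : 'I_n, (u < t)%N -> as_ u = as' u) ->
    info t os as_ = info t os' as'.

Definition causal_belief (bel : 'I_n.+1 -> obss -> acts -> {ffun S -> R}) : Prop :=
  forall (t : 'I_n.+1) (os os' : obss) (as_ as' : acts),
    (forall u : 'I_n.+1, (u <= t)%N -> os u = os' u) ->
    (forall u : 'I_n, (u < t)%N -> as_ u = as' u) ->
    bel t os as_ = bel t os' as'.

(* law p^pi of the joint trajectory (states, observations, actions);
   beliefs are deterministic functions of it *)
Definition traj_prob (I : Type) (mu : S -> R) (P : S -> A -> S -> R)
  (Ob : S -> O -> R) (info : 'I_n -> obss -> acts -> I) (pi : I -> A -> R)
  (ss : states) (os : obss) (as_ : acts) : R :=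
  mu (ss ord0) * (\prod_(t < n.+1) Ob (ss t) (os t)) *
  \prod_(t < n) (pi (info t os as_) (as_ t) * P (ss (tcur t)) (as_ t) (ss (tnext t))).

Definition bel_traj (bel : 'I_n.+1 -> obss -> acts -> {ffun S -> R})
  (os : obss) (as_ : acts) : {ffun 'I_n.+1 -> {ffun S -> R}} :=
  [ffun t => bel t os as_].

Definition believed_prob (B : {ffun 'I_n.+1 -> {ffun S -> R}}) (st : states) : R :=
  \prod_(t < n.+1) B t (st t).

Definition Hbar (B : {ffun 'I_n.+1 -> {ffun S -> R}}) : R :=
  \sum_(st : states) believed_prob B st * entropy (empirical st).

Definition MBE (I : Type) mu P Ob (info : 'I_n -> obss -> acts -> I)
  bel (pi : I -> A -> R) : R :=
  \sum_(ss : states) \sum_(os : obss) \sum_(as_ : acts)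
    traj_prob mu P Ob info pi ss os as_ * Hbar (bel_traj bel os as_).

Definition bel_traj_prob (I : Type) mu P Ob (info : 'I_n -> obss -> acts -> I)
  bel (pi : I -> A -> R) (B : {ffun 'I_n.+1 -> {ffun S -> R}}) : R :=
  \sum_(ss : states) \sum_(os : obss) \sum_(as_ : acts | bel_traj bel os as_ == B)
    traj_prob mu P Ob info pi ss os as_.

Definition TB (I : Type) mu P Ob (info : 'I_n -> obss -> acts -> I) bel
  (pi1 pi2 : I -> A -> R) : set {ffun 'I_n.+1 -> {ffun S -> R}} :=
  [set B | 0 < bel_traj_prob mu P Ob info bel pi1 B \/
           0 < bel_traj_prob mu P Ob info bel pi2 B].

End POMDP.

(* Main.v *)
Require Import Defs.
From HB Require Import structures.
From mathcomp Require Import all_boot all_order all_algebra.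
From mathcomp Require Import all_classical all_reals all_analysis.
From mathcomp.algebra_tactics Require Import ring lra.
Import Order.TTheory GRing.Theory Num.Theory.
Import numFieldNormedType.Exports.
Local Open Scope ring_scope.
Local Open Scope classical_set_scope.
Set Implicit Arguments. Unset Strict Implicit. Unset Printing Implicit Defensive.
From mathcomp Require Import zify.
Lemma split_sum (R : realType) (T X : finType) (F : T -> R) (Pa : pred T)
  (Pb : X -> pred T) (pr : T -> X) :
  (forall x y, Pb x y = Pa y && (x == pr y)) ->
  \sum_(y | Pa y) F y = \sum_x \sum_(y | Pb x y) F y.
Proof.
move=> H.
transitivity (\sum_y \sum_(x | Pb x y) F y); last first.
  rewrite (eq_bigr (fun y => \sum_x (if Pb x y then F y else 0))); last by move=> y _; rewrite big_mkcond.
  rewrite exchange_big; apply: eq_bigr => x _; by rewrite -big_mkcond.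
rewrite big_mkcond; apply: eq_bigr => y _.
under eq_bigl => x do rewrite H.
case: (Pa y) => /=; first by rewrite big_pred1_eq.
by rewrite big_pred0.
Qed.

Lemma prod_split (R : realType) n (f : 'I_n -> R) (t : 'I_n) :
  \prod_(u < n | (t <= u)%N) f u = f t * \prod_(u < n | (t.+1 <= u)%N) f u.
Proof.
rewrite (bigD1 t) //=; congr (_ * _); apply: eq_bigl => u.
by rewrite [in RHS]ltn_neqAle andbC eq_sym val_eqE.
Qed.

Lemma sum3 (R : realType) (A S O : finType) (F : A * S * O -> R) :
  \sum_(z : A * S * O) F z = \sum_a \sum_s \sum_o F (a, s, o).
Proof.
symmetry.
rewrite (pair_bigA _ (fun a s => \sum_o F (a, s, o))) /=.
rewrite (pair_bigA _ (fun p o => F (p.1, p.2, o))) /=.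
by apply: eq_bigr => [[[a s] o]].
Qed.

Section Traj.
Variable R : realType.
Variables (S A O : finType) (n : nat).

Definition Tr := ({ffun 'I_n.+1 -> S} * {ffun 'I_n.+1 -> O} * {ffun 'I_n -> A})%type.

Definition agree (k : nat) (x y : Tr) : bool :=
  [forall u : 'I_n.+1, (u <= k)%N ==> (x.1.1 u == y.1.1 u) && (x.1.2 u == y.1.2 u)] &&
  [forall u : 'I_n, (u < k)%N ==> (x.2 u == y.2 u)].

Definition upd (t : 'I_n) (x : Tr) (z : A * S * O) : Tr :=
  ([ffun u => if u == tnext t then z.1.2 else x.1.1 u],
   [ffun u => if u == tnext t then z.2 else x.1.2 u],
   [ffun u => if u == t then z.1.1 else x.2 u]).

Definition upd0 (x : Tr) (z : S * O) : Tr :=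
  ([ffun u => if u == ord0 then z.1 else x.1.1 u],
   [ffun u => if u == ord0 then z.2 else x.1.2 u], x.2).

Lemma tnextE (t : 'I_n) : nat_of_ord (tnext t) = t.+1.
Proof. by rewrite /tnext lift0. Qed.

Lemma tcurE (t : 'I_n) : nat_of_ord (tcur t) = t.
Proof. by []. Qed.

Lemma eq_tnext (u : 'I_n.+1) (t : 'I_n) : (u == tnext t) = (nat_of_ord u == t.+1).
Proof. by rewrite -tnextE. Qed.

Lemma agree_refl k (x : Tr) : agree k x x.
Proof. by apply/andP; split; apply/forallP => u; rewrite !eqxx ?implybT. Qed.

Lemma agree_sym k (x y : Tr) : agree k x y = agree k y x.
Proof.
rewrite /agree; congr (_ && _); apply: eq_forallb => u.
  by rewrite (eq_sym (x.1.1 u)) (eq_sym (x.1.2 u)).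
by rewrite (eq_sym (x.2 u)).
Qed.

Lemma agree_le k k' (x y : Tr) : (k' <= k)%N -> agree k x y -> agree k' x y.
Proof.
move=> kk /andP[/forallP H1 /forallP H2]; apply/andP; split; apply/forallP => u;
  apply/implyP => hu; [apply: (implyP (H1 u)) | apply: (implyP (H2 u))]; lia.
Qed.

Lemma agree_n (x y : Tr) : agree n x y -> x = y.
Proof.
move=> /andP[/forallP H1 /forallP H2].
case: x H1 H2 => [[a b] c]; case: y => [[a' b'] c'] /= H1 H2.
have e1 : a = a'.
  by apply/ffunP => u; have /implyP/(_ (leq_ord u))/andP[/eqP -> _] := H1 u.
have e2 : b = b'.
  by apply/ffunP => u; have /implyP/(_ (leq_ord u))/andP[_ /eqP ->] := H1 u.
have e3 : c = c'.
  by apply/ffunP => u; have /implyP/(_ (ltn_ord u))/eqP -> := H2 u.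
by rewrite e1 e2 e3.
Qed.

Lemma agree_upd (t : 'I_n) (x y : Tr) (z : A * S * O) :
  agree t.+1 (upd t x z) y =
  agree t x y && (z == (y.2 t, y.1.1 (tnext t), y.1.2 (tnext t))).
Proof.
case: z => [[a s] o]; rewrite /upd /agree /=.
apply/idP/idP.
- move=> /andP[/forallP H1 /forallP H2].
  have := H1 (tnext t); rewrite tnextE leqnn /= !ffunE eqxx => /andP[/eqP -> /eqP ->].
  have := H2 t; rewrite leqnn /= !ffunE eqxx => /eqP ->.
  rewrite !eqxx !andbT; apply/andP; split; apply/forallP => u; apply/implyP => hu.
  + have := H1 u; rewrite !ffunE eq_tnext (_ : (u <= t.+1)%N) /=; last lia.
    by rewrite (_ : (nat_of_ord u == t.+1) = false) //; apply/negbTE; lia.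
  + have := H2 u; rewrite !ffunE (_ : (u < t.+1)%N) /=; last lia.
    by rewrite (_ : (u == t) = false) //; apply/negbTE; rewrite -val_eqE /=; lia.
- move=> /andP[/andP[/forallP H1 /forallP H2] /eqP [-> -> ->]].
  apply/andP; split; apply/forallP => u; apply/implyP => hu; rewrite !ffunE.
  + case: (eqVneq u (tnext t)) => [-> | ne]; first by rewrite !eqxx.
    apply: (implyP (H1 u)).
    have : (nat_of_ord u != t.+1) by rewrite -eq_tnext.
    lia.
  + case: (eqVneq u t) => [-> | ne]; first by rewrite !eqxx.
    apply: (implyP (H2 u)).
    have : (nat_of_ord u != t) by rewrite val_eqE.
    lia.
Qed.

Lemma agree_upd_self (t : 'I_n) (x : Tr) (z : A * S * O) : agree t x (upd t x z).
Proof.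
apply/andP; split; apply/forallP => u; apply/implyP => hu; rewrite !ffunE.
- rewrite eq_tnext (_ : (nat_of_ord u == t.+1) = false) ?eqxx //; apply/negbTE; lia.
- rewrite (_ : (u == t) = false) ?eqxx //; apply/negbTE; rewrite -val_eqE /=; lia.
Qed.

Lemma agree_upd0 (x y : Tr) (z : S * O) :
  agree 0 (upd0 x z) y = (z == (y.1.1 ord0, y.1.2 ord0)).
Proof.
case: z => s o; rewrite /upd0 /agree /=.
apply/idP/idP.
- move=> /andP[/forallP H1 _].
  by have := H1 ord0; rewrite /= !ffunE eqxx => /andP[/eqP -> /eqP ->].
- move=> /eqP [-> ->]; apply/andP; split; apply/forallP => u; apply/implyP => hu.
    rewrite !ffunE; have -> : u = ord0 by apply/val_inj => /=; lia.
    by rewrite !eqxx.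
  by have := hu isT.
Qed.


Definition G (w : 'I_n -> Tr -> R) (k : nat) (x : Tr) : R :=
  \prod_(t < n | (k <= t)%N) w t x.

Definition V (w : 'I_n -> Tr -> R) (k : nat) (x : Tr) : R :=
  \sum_(y | agree k x y) G w k y.

Definition wdep (w : 'I_n -> Tr -> R) :=
  forall (t : 'I_n) (x y : Tr), agree t.+1 x y -> w t x = w t y.

Lemma V_step w (t : 'I_n) x : wdep w ->
  V w t x = \sum_z w t (upd t x z) * V w t.+1 (upd t x z).
Proof.
move=> dw; rewrite /V (@split_sum _ _ _ _ _ (fun z y => agree t.+1 (upd t x z) y)
   (fun y => (y.2 t, y.1.1 (tnext t), y.1.2 (tnext t)))); last first.
  by move=> z y; rewrite agree_upd.
apply: eq_bigr => z _; rewrite mulr_sumr; apply: eq_bigr => y hy.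
rewrite /G prod_split; congr (_ * _); apply: dw.
by rewrite agree_sym.
Qed.

Lemma V_n w x : V w n x = 1.
Proof.
rewrite /V /G.
rewrite (eq_bigl (fun y => y == x)); last first.
  move=> y; apply/idP/idP => [/agree_n -> //| /eqP ->]; exact: agree_refl.
rewrite big_pred1_eq big_pred0 // => t; by rewrite leqNgt ltn_ord.
Qed.

Lemma V_eq w (c : 'I_n -> R) : wdep w ->
  (forall t x, \sum_z w t (upd t x z) = c t) ->
  forall x, V w 0 x = \prod_(t < n) c t.
Proof.
move=> dw hc.
suff H : forall m, (m <= n)%N -> forall x,
    V w (n - m) x = \prod_(t < n | (n - m <= t)%N) c t.
  by move=> x; rewrite -{1}(subnn n) H //; apply: eq_bigl => t; rewrite subnn.
elim=> [|m IH] hm x.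
  by rewrite subn0 V_n big_pred0 // => t; by rewrite leqNgt ltn_ord.
have ht : (n - m.+1 < n)%N by lia.
pose t := Ordinal ht.
have -> : (n - m.+1)%N = t by [].
rewrite V_step // prod_split.
have -> : (t.+1 = n - m)%N by rewrite /=; lia.
have hm' : (m <= n)%N by lia.
under eq_bigr => z _ do rewrite (IH hm').
by rewrite -mulr_suml hc.
Qed.

Lemma V_le w (c : 'I_n -> R) : wdep w ->
  (forall t x, 0 <= w t x) -> (forall t, 0 <= c t) ->
  (forall t x, \sum_z w t (upd t x z) <= c t) ->
  forall x, V w 0 x <= \prod_(t < n) c t.
Proof.
move=> dw w0 c0 hc.
suff H : forall m, (m <= n)%N -> forall x,
    V w (n - m) x <= \prod_(t < n | (n - m <= t)%N) c t.
  move=> x; rewrite -{1}(subnn n); apply: le_trans (H n (leqnn n) x) _.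
  by rewrite le_eqVlt; apply/orP; left; apply/eqP; apply: eq_bigl => t; rewrite subnn.
elim=> [|m IH] hm x.
  by rewrite subn0 V_n big_pred0 // => t; by rewrite leqNgt ltn_ord.
have ht : (n - m.+1 < n)%N by lia.
pose t := Ordinal ht.
have -> : (n - m.+1)%N = t by [].
rewrite V_step // prod_split.
have -> : (t.+1 = n - m)%N by rewrite /=; lia.
apply: le_trans (_ : \sum_z w t (upd t x z) * \prod_(t0 < n | (n - m <= t0)%N) c t0 <= _).
  have hm' : (m <= n)%N by lia.
  apply: ler_sum => z _; apply: ler_wpM2l => //; exact: IH.
rewrite -mulr_suml; apply: ler_wpM2r => //; exact: prodr_ge0.
Qed.

Variables (mu : S -> R) (Ob : S -> O -> R).

Definition step0 (x : Tr) : R := mu (x.1.1 ord0) * Ob (x.1.1 ord0) (x.1.2 ord0).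

Lemma init_sum w (x0 : Tr) :
  \sum_x step0 x * G w 0 x = \sum_s \sum_o mu s * Ob s o * V w 0 (upd0 x0 (s, o)).
Proof.
rewrite -(big_mkcond (fun _ => true)) /=.
rewrite (@split_sum _ _ _ _ _ (fun z y => agree 0 (upd0 x0 z) y)
   (fun y => (y.1.1 ord0, y.1.2 ord0))); last first.
  by move=> z y; rewrite agree_upd0.
rewrite (pair_bigA _ (fun s o => mu s * Ob s o * V w 0 (upd0 x0 (s, o)))) /=.
apply: eq_bigr => [[s o]] _ /=; rewrite /V mulr_sumr; apply: eq_bigr => y.
rewrite agree_upd0 => /eqP [-> ->]; by [].
Qed.

Variables (I : Type) (info : 'I_n -> {ffun 'I_n.+1 -> O} -> {ffun 'I_n -> A} -> I)
  (P : S -> A -> S -> R).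
Hypothesis ci : causal_info info.
Hypothesis hP : forall s a, is_dist (P s a).
Hypothesis hO : forall s, is_dist (Ob s).
Hypothesis hmu : is_dist mu.

Definition stepS (pol : 'I_n -> I -> A -> R) (t : 'I_n) (x : Tr) : R :=
  pol t (info t x.1.2 x.2) (x.2 t) * P (x.1.1 (tcur t)) (x.2 t) (x.1.1 (tnext t))
  * Ob (x.1.1 (tnext t)) (x.1.2 (tnext t)).

Definition prob pol (x : Tr) : R := step0 x * \prod_(t < n) stepS pol t x.

Lemma info_agree (t : 'I_n) (x y : Tr) : agree t x y -> info t x.1.2 x.2 = info t y.1.2 y.2.
Proof.
move=> /andP[/forallP H1 /forallP H2]; apply: ci => u hu.
  by have /implyP/(_ hu)/andP[_ /eqP] := H1 u.
by have /implyP/(_ hu)/eqP := H2 u.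
Qed.

Lemma stepS_dep pol : wdep (stepS pol).
Proof.
move=> t x y hxy; rewrite /stepS.
rewrite (info_agree (agree_le (leqnSn t) hxy)).
move: hxy => /andP[/forallP H1 /forallP H2].
have /implyP/(_ (ltnSn t))/eqP -> := H2 t.
have := H1 (tcur t); rewrite tcurE (leqnSn t) => /andP[/eqP -> _].
by have := H1 (tnext t); rewrite tnextE leqnn => /andP[/eqP -> /eqP ->].
Qed.

Lemma stepS_ext pol pol' t x : pol t = pol' t -> stepS pol t x = stepS pol' t x.
Proof. by rewrite /stepS => ->. Qed.

Lemma stepS_sum_gen pol (t : 'I_n) x :
  \sum_z stepS pol t (upd t x z) = \sum_a pol t (info t x.1.2 x.2) a.
Proof.
rewrite sum3; apply: eq_bigr => a _.
have tc : tcur t != tnext t by rewrite eq_tnext tcurE; lia.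
transitivity (\sum_s \sum_o pol t (info t x.1.2 x.2) a * P (x.1.1 (tcur t)) a s * Ob s o).
  apply: eq_bigr => s _; apply: eq_bigr => o _.
  rewrite /stepS -(info_agree (agree_upd_self t x (a, s, o))) /upd /= !ffunE !eqxx.
  by rewrite (negbTE tc).
under eq_bigr => s _ do rewrite -mulr_sumr (proj2 (hO s)) mulr1.
by rewrite -mulr_sumr (proj2 (hP _ _)) mulr1.
Qed.

Lemma stepS_ge0 pol t x : (forall t i a, 0 <= pol t i a) -> 0 <= stepS pol t x.
Proof.
move=> h; rewrite /stepS; apply: mulr_ge0; first apply: mulr_ge0 => //.
  exact: (proj1 (hP _ _)).
exact: (proj1 (hO _)).
Qed.

Lemma step0_ge0 x : 0 <= step0 x.
Proof. rewrite /step0; apply: mulr_ge0; [exact: (proj1 hmu)| exact: (proj1 (hO _))]. Qed.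

Lemma probE pol x : prob pol x = step0 x * G (stepS pol) 0 x.
Proof. by []. Qed.

Lemma prob_sum1 pol (x0 : Tr) : (forall t i, is_dist (pol t i)) ->
  \sum_x prob pol x = 1.
Proof.
move=> hp; under eq_bigr => x _ do rewrite probE.
rewrite (init_sum _ x0).
have Veq : forall y, V (stepS pol) 0 y = 1.
  move=> y; rewrite (@V_eq _ (fun _ => 1)) ?big1_eq //.
    exact: stepS_dep.
  by move=> t x; rewrite stepS_sum_gen; exact: (proj2 (hp _ _)).
under eq_bigr => s _ do under eq_bigr => o _ do rewrite Veq mulr1.
under eq_bigr => s _ do rewrite -mulr_sumr (proj2 (hO s)) mulr1.
exact: (proj2 hmu).
Qed.


Variables (pi1 pi2 : I -> A -> R).
Hypothesis hpi1 : forall i, is_dist (pi1 i).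
Hypothesis hpi2 : forall i, is_dist (pi2 i).

Definition polk (k : nat) (t : 'I_n) : I -> A -> R := if (t < k)%N then pi1 else pi2.
Definition polD (k : nat) (t : 'I_n) : I -> A -> R :=
  if (t < k)%N then pi1 else if (nat_of_ord t == k) then (fun i a => `|pi1 i a - pi2 i a|)
  else pi2.

Lemma dTV_le1 i : dTV (pi1 i) (pi2 i) <= 1.
Proof.
rewrite /dTV.
have : \sum_a `|pi1 i a - pi2 i a| <= \sum_a (pi1 i a + pi2 i a).
  apply: ler_sum => a _; apply: le_trans (ler_normB _ _) _.
  by rewrite !ger0_norm //; [exact: (proj1 (hpi2 i)) | exact: (proj1 (hpi1 i))].
rewrite big_split /= (proj2 (hpi1 i)) (proj2 (hpi2 i)) => h.
lra.
Qed.

Lemma dTV_ge0 i : 0 <= dTV (pi1 i) (pi2 i).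
Proof. rewrite /dTV; apply: mulr_ge0; [lra | apply: sumr_ge0 => a _; exact: normr_ge0]. Qed.

Lemma sum_abs_le i : \sum_a `|pi1 i a - pi2 i a| <= 2 * dTV_pol pi1 pi2.
Proof.
have h : dTV (pi1 i) (pi2 i) <= dTV_pol pi1 pi2.
  apply: sup_upper_bound; last by exists i.
  split; first by exists (dTV (pi1 i) (pi2 i)); exists i.
  by exists 1 => _ [j _ <-]; exact: dTV_le1.
move: h; rewrite /dTV => h; lra.
Qed.

Lemma dTV_pol_ge0 : 0 <= dTV_pol pi1 pi2.
Proof.
have [[i _]|nI] := pselect (exists i : I, True).
  apply: le_trans (dTV_ge0 i) _.
  apply: sup_upper_bound; last by exists i.
  split; first by exists (dTV (pi1 i) (pi2 i)); exists i.
  by exists 1 => _ [j _ <-]; exact: dTV_le1.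
rewrite /dTV_pol.
have -> : range (fun i => dTV (pi1 i) (pi2 i)) = set0.
  by apply/seteqP; split => // y [i _ _]; apply: nI; exists i.
by rewrite sup0.
Qed.

Lemma diff_abs (k : 'I_n) x :
  `|prob (polk k.+1) x - prob (polk k) x| = step0 x * \prod_(t < n) stepS (polD k) t x.
Proof.
rewrite /prob [\prod_(t < n) stepS (polk k.+1) t x](bigD1 k) //.
rewrite [\prod_(t < n) stepS (polk k) t x](bigD1 k) //.
rewrite [\prod_(t < n) stepS (polD k) t x](bigD1 k) //=.
have e : \prod_(t < n | t != k) stepS (polk k.+1) t x =
         \prod_(t < n | t != k) stepS (polD k) t x.
  apply: eq_bigr => t tk; apply: stepS_ext; rewrite /polk /polD.
  have tk' : nat_of_ord t != k by rewrite val_eqE.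
  rewrite (negbTE tk'); have -> : (t < k.+1)%N = (t < k)%N by lia.
  by [].
have e' : \prod_(t < n | t != k) stepS (polk k) t x =
         \prod_(t < n | t != k) stepS (polD k) t x.
  apply: eq_bigr => t tk; apply: stepS_ext; rewrite /polk /polD.
  have tk' : nat_of_ord t != k by rewrite val_eqE.
  by rewrite (negbTE tk').
have pD0 : forall t i a, 0 <= polD k t i a.
  move=> t' j b; rewrite /polD.
  case: ifP => _; first exact: (proj1 (hpi1 _)).
  case: ifP => _; first exact: normr_ge0.
  exact: (proj1 (hpi2 _)).
have Q0 : 0 <= \prod_(t < n | t != k) stepS (polD k) t x.
  by apply: prodr_ge0 => t _; apply: stepS_ge0.
rewrite e e'.
move: Q0; set Q := \prod_(t < n | t != k) _ => Q0.
rewrite /stepS /polk /polD ltnSn ltnn eqxx /=.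
set i := info k x.1.2 x.2; set a := x.2 k.
set PP := P _ _ _; set OO := Ob _ _.
have PP0 : 0 <= PP by exact: (proj1 (hP _ _)).
have OO0 : 0 <= OO by exact: (proj1 (hO _)).
rewrite (_ : _ - _ = step0 x * ((pi1 i a - pi2 i a) * PP * OO * Q)); last by ring.
rewrite normrM !normrM (ger0_norm PP0) (ger0_norm OO0) (ger0_norm Q0).
by rewrite -normrM (ger0_norm (step0_ge0 x)).
Qed.

Lemma hybrid_le (k : 'I_n) (x0 : Tr) :
  \sum_x `|prob (polk k.+1) x - prob (polk k) x| <= 2 * dTV_pol pi1 pi2.
Proof.
under eq_bigr => x _ do rewrite diff_abs.
rewrite (init_sum _ x0).
have D0 := dTV_pol_ge0.
have pD0 : forall t i a, 0 <= polD k t i a.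
  move=> t' j b; rewrite /polD.
  case: ifP => _; first exact: (proj1 (hpi1 _)).
  case: ifP => _; first exact: normr_ge0.
  exact: (proj1 (hpi2 _)).
have Vle : forall y, V (stepS (polD k)) 0 y <= 2 * dTV_pol pi1 pi2.
  move=> y; apply: le_trans (@V_le _ (fun t => if t == k then 2 * dTV_pol pi1 pi2 else 1)
     (stepS_dep _) _ _ _ y) _.
  - by move=> t z; exact: stepS_ge0.
  - by move=> t; case: ifP => _; lra.
  - move=> t z; rewrite stepS_sum_gen /polD.
    case: ifP => tk.
      rewrite (proj2 (hpi1 _)); have -> : (t == k) = false by apply/negbTE; rewrite -val_eqE /=; lia.
      by [].
    case: ifP => tk'.
      have -> : t == k by rewrite -val_eqE /=.
      exact: sum_abs_le.
    rewrite (proj2 (hpi2 _)); have -> : (t == k) = false by apply/negbTE; rewrite -val_eqE /= tk'.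
    by [].
  - rewrite (bigD1 k) //= eqxx big1 ?mulr1 // => t /negbTE -> //.
apply: le_trans (_ : \sum_s \sum_o mu s * Ob s o * (2 * dTV_pol pi1 pi2) <= _).
  apply: ler_sum => s _; apply: ler_sum => o _; apply: ler_wpM2l => //.
  by apply: mulr_ge0; [exact: (proj1 hmu) | exact: (proj1 (hO _))].
under eq_bigr => s _ do rewrite -mulr_suml -mulr_sumr (proj2 (hO s)) mulr1.
by rewrite -mulr_suml (proj2 hmu) mul1r.
Qed.

End Traj.

Lemma sumTr (R : realType) (S A O : finType) n (F : {ffun 'I_n.+1 -> S} -> {ffun 'I_n.+1 -> O} -> {ffun 'I_n -> A} -> R) :
  \sum_ss \sum_os \sum_as_ F ss os as_ = \sum_(x : Tr S A O n) F x.1.1 x.1.2 x.2.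
Proof.
rewrite (pair_bigA _ (fun ss os => \sum_as_ F ss os as_)) /=.
rewrite (pair_bigA _ (fun p as_ => F p.1 p.2 as_)) /=.
by [].
Qed.

Lemma traj_probE (R : realType) (S A O : finType) n (mu : S -> R) P (Ob : S -> O -> R) I
  (info : 'I_n -> {ffun 'I_n.+1 -> O} -> {ffun 'I_n -> A} -> I) (pi : I -> A -> R) ss os as_ :
  traj_prob mu P Ob info pi ss os as_ = prob mu Ob info P (fun _ => pi) (ss, os, as_).
Proof.
rewrite /traj_prob /prob /step0 /stepS big_ord_recl /= [in RHS]big_split /=.
rewrite /tnext; ring.
Qed.

Lemma pos_term (R : realType) (T : finType) (Pr : pred T) (F : T -> R) :
  0 < \sum_(x | Pr x) F x -> exists x, Pr x && (0 < F x).
Proof.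
move=> h; case: (boolP [exists x, Pr x && (0 < F x)]) => [/existsP //|/existsPn hn].
exfalso.
have : \sum_(x | Pr x) F x <= \sum_(x | Pr x) 0.
  apply: ler_sum => x px; have := hn x; rewrite px /= leNgt => ->.
  by [].
by rewrite big1_eq; lra.
Qed.

Lemma empirical_ge0 (R : realType) (S : finType) n (x : {ffun 'I_n.+1 -> S}) y :
  0 <= @empirical R S n x y.
Proof. by rewrite /empirical; apply: divr_ge0. Qed.

Lemma empirical_le1 (R : realType) (S : finType) n (x : {ffun 'I_n.+1 -> S}) y :
  @empirical R S n x y <= 1.
Proof.
rewrite /empirical ler_pdivrMr ?ltr0Sn // mul1r ler_nat.
by rewrite -[X in (_ <= X)%N](card_ord n.+1) max_card.
Qed.

Lemma entropy_ge0 (R : realType) (X : finType) (p : X -> R) :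
  (forall x, 0 <= p x <= 1) -> 0 <= entropy p.
Proof.
move=> hp; rewrite /entropy oppr_ge0; apply: sumr_le0 => x _.
case: eqP => // px; have /andP[p0 p1] := hp x.
rewrite mulr_ge0_le0 //; exact: ln_le0.
Qed.

Lemma Hbar_ge0 (R : realType) (S : finType) n (B : {ffun 'I_n.+1 -> {ffun S -> R}}) :
  (forall t s, 0 <= B t s) -> 0 <= Hbar B.
Proof.
move=> hB; rewrite /Hbar; apply: sumr_ge0 => st _; apply: mulr_ge0.
  by apply: prodr_ge0 => t _.
apply: entropy_ge0 => y; rewrite empirical_ge0 empirical_le1 //.
Qed.

Lemma part_ii (R : realType) (S A O : finType) (n : nat)
  (mu : S -> R) (P : S -> A -> S -> R) (Ob : S -> O -> R)
  (I : Type) (info : 'I_n -> {ffun 'I_n.+1 -> O} -> {ffun 'I_n -> A} -> I)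
  (bel : 'I_n.+1 -> {ffun 'I_n.+1 -> O} -> {ffun 'I_n -> A} -> {ffun S -> R}) :
  is_dist mu ->
  (forall s a, is_dist (P s a)) ->
  (forall s, is_dist (Ob s)) ->
  causal_info info ->
  (forall t os as_, is_dist (bel t os as_)) ->
  forall (pi1 pi2 : I -> A -> R)
          (Bstar : {ffun 'I_n.+1 -> {ffun S -> R}}),
     (forall i, is_dist (pi1 i)) -> (forall i, is_dist (pi2 i)) ->
     TB mu P Ob info bel pi1 pi2 Bstar ->
     (forall B, TB mu P Ob info bel pi1 pi2 B -> Hbar B <= Hbar Bstar) ->
     `|MBE mu P Ob info bel pi1 - MBE mu P Ob info bel pi2|
       <= n.+1%:R * Hbar Bstar * dTV_pol pi1 pi2.
Proof.
move=> hmu hP hO ci hbel pi1 pi2 Bstar h1 h2 hTB hmax.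
set M := Hbar Bstar.
set D := dTV_pol pi1 pi2.
pose h := fun x : Tr S A O n => Hbar (bel_traj bel x.1.2 x.2).
pose p := fun pi (x : Tr S A O n) => prob mu Ob info P (fun _ => pi) x.
have MBEE : forall pi, MBE mu P Ob info bel pi = \sum_x p pi x * h x.
  move=> pi; rewrite /MBE sumTr; apply: eq_bigr => -[[a b] c] _ /=.
  by rewrite traj_probE.
have BTE : forall pi B, bel_traj_prob mu P Ob info bel pi B =
    \sum_(x | bel_traj bel x.1.2 x.2 == B) p pi x.
  move=> pi B; rewrite /bel_traj_prob.
  under eq_bigr => ss _ do under eq_bigr => os _ do rewrite big_mkcond.
  rewrite sumTr [RHS]big_mkcond; apply: eq_bigr => -[[a b] c] _ /=.
  by rewrite traj_probE.
have pge0 : forall pi, (forall i, is_dist (pi i)) -> forall x, 0 <= p pi x.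
  move=> pi hpi x; rewrite /p /prob; apply: mulr_ge0; first exact: step0_ge0.
  apply: prodr_ge0 => t _; apply: stepS_ge0 => // t' i a; exact: (proj1 (hpi i)).
have supp : forall x, (0 < p pi1 x) || (0 < p pi2 x) -> 0 <= h x <= M.
  move=> x hx; apply/andP; split.
    by apply: Hbar_ge0 => t s; rewrite ffunE; exact: (proj1 (hbel _ _ _)).
  apply: hmax; rewrite /TB /=.
  have key : forall pi, (forall i, is_dist (pi i)) ->
      p pi x <= bel_traj_prob mu P Ob info bel pi (bel_traj bel x.1.2 x.2).
    move=> pi hpi; rewrite BTE (bigD1 x) ?eqxx //=.
    by rewrite lerDl; apply: sumr_ge0 => y _; exact: pge0.
  case/orP: hx => hx; [left | right]; apply: lt_le_trans hx _; exact: key.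
have [x0 _] : exists x0 : Tr S A O n, True.
  case: hTB => hb; rewrite BTE in hb; have [x0 _] := pos_term hb; by exists x0.
have s1 : \sum_x p pi1 x = 1 by apply: (prob_sum1 ci hP hO hmu x0) => t i; exact: h1.
have s2 : \sum_x p pi2 x = 1 by apply: (prob_sum1 ci hP hO hmu x0) => t i; exact: h2.
have M0 : 0 <= M.
  have [x /andP[_ hx]] : exists x, true && (0 < p pi1 x) by apply: pos_term; rewrite s1; lra.
  by have /andP[a b] := supp x (introT orP (or_introl hx)); apply: le_trans b.
have D0 : 0 <= D by exact: (dTV_pol_ge0 h1 h2).
have tele : forall x, p pi1 x - p pi2 x =
    \sum_(k < n) (prob mu Ob info P (polk pi1 pi2 k.+1) x - prob mu Ob info P (polk pi1 pi2 k) x).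
  move=> x.
  rewrite -(big_mkord xpredT (fun k => prob mu Ob info P (polk pi1 pi2 k.+1) x
     - prob mu Ob info P (polk pi1 pi2 k) x)) telescope_sumr //.
  rewrite /p /prob; congr (_ * _ - _ * _); apply: eq_bigr => t _; apply: stepS_ext.
    by rewrite /polk ltn_ord.
rewrite !MBEE.
have F : \sum_x (p pi1 x - p pi2 x) * (M / 2) = 0.
  by rewrite -mulr_suml sumrB s1 s2 subrr mul0r.
have E : \sum_x p pi1 x * h x - \sum_x p pi2 x * h x =
    \sum_x (p pi1 x - p pi2 x) * (h x - M / 2).
  rewrite -sumrB.
  transitivity (\sum_x (p pi1 x * h x - p pi2 x * h x) - \sum_x (p pi1 x - p pi2 x) * (M / 2)).
    by rewrite F subr0.
  by rewrite -sumrB; apply: eq_bigr => x _; ring.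
rewrite E; apply: le_trans (ler_norm_sum _ _ _) _.
apply: le_trans (_ : \sum_x `|p pi1 x - p pi2 x| * (M / 2) <= _).
  apply: ler_sum => x _; rewrite normrM.
  case: (boolP ((0 < p pi1 x) || (0 < p pi2 x))) => hx.
    have /andP[a b] := supp x hx; apply: ler_wpM2l => //.
    by rewrite ler_norml; apply/andP; split; lra.
  move: hx; rewrite negb_or -!leNgt => /andP[a b].
  have e1 : p pi1 x = 0 by apply/eqP; rewrite eq_le a pge0.
  have e2 : p pi2 x = 0 by apply/eqP; rewrite eq_le b pge0.
  by rewrite e1 e2 subrr normr0 !mul0r.
rewrite -mulr_suml.
apply: le_trans (_ : (\sum_(k < n) 2 * D) * (M / 2) <= _).
  apply: ler_wpM2r; first lra.
  apply: le_trans (_ : \sum_x \sum_(k < n) `|prob mu Ob info P (polk pi1 pi2 k.+1) x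
      - prob mu Ob info P (polk pi1 pi2 k) x| <= _).
    by apply: ler_sum => x _; rewrite tele; exact: ler_norm_sum.
  rewrite exchange_big /=; apply: ler_sum => k _; exact: (hybrid_le ci hP hO hmu h1 h2 k x0).
have -> : (\sum_(k < n) 2 * D) * (M / 2) = M * D * n%:R.
  by rewrite sumr_const card_ord -mulr_natr; field.
have -> : n.+1%:R * M * D = M * D * n.+1%:R by ring.
apply: ler_wpM2l; first exact: mulr_ge0.
by rewrite ler_nat.
Qed.

Section Deriv.
Variables (R : realType) (V : normedModType R).

Lemma diff_sum_seq (J : Type) (r : seq J) (F : J -> V -> R) x :
  (forall j, differentiable (F j) x) -> differentiable (fun y => \sum_(j <- r) F j y) x.
Proof.
move=> hF; elim: r => [|j r IH].
  have -> : (fun y => \sum_(j <- [::]) F j y) = cst 0 by apply/funext => y; rewrite big_nil.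
  exact: differentiable_cst.
have -> : (fun y => \sum_(i <- j :: r) F i y) = F j + (fun y => \sum_(i <- r) F i y).
  by apply/funext => y; rewrite big_cons.
exact: differentiableD.
Qed.

Lemma diff_prod_seq (J : Type) (r : seq J) (F : J -> V -> R) x :
  (forall j, differentiable (F j) x) -> differentiable (fun y => \prod_(j <- r) F j y) x.
Proof.
move=> hF; elim: r => [|j r IH].
  have -> : (fun y => \prod_(j <- [::]) F j y) = cst 1 by apply/funext => y; rewrite big_nil.
  exact: differentiable_cst.
have -> : (fun y => \prod_(i <- j :: r) F i y) = F j * (fun y => \prod_(i <- r) F i y).
  by apply/funext => y; rewrite big_cons.
exact: differentiableM.
Qed.

Lemma is_derive_sum_seq (J : Type) (r : seq J) (F : J -> V -> R) (dF : J -> R) x v :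
  (forall j, is_derive x v (F j) (dF j)) ->
  is_derive x v (fun y => \sum_(j <- r) F j y) (\sum_(j <- r) dF j).
Proof.
move=> hF; elim: r => [|j r IH].
  have -> : (fun y => \sum_(j <- [::]) F j y) = cst 0 by apply/funext => y; rewrite big_nil.
  by rewrite big_nil; exact: is_derive_cst.
have -> : (fun y => \sum_(i <- j :: r) F i y) = F j + (fun y => \sum_(i <- r) F i y).
  by apply/funext => y; rewrite big_cons.
by rewrite big_cons; exact: is_deriveD.
Qed.

Lemma is_derive_prod_seq (J : Type) (r : seq J) (F : J -> V -> R) (dF : J -> R) x v :
  (forall j, is_derive x v (F j) (dF j)) -> (forall j, F j x != 0) ->
  is_derive x v (fun y => \prod_(j <- r) F j y)
    ((\prod_(j <- r) F j x) * \sum_(j <- r) dF j / F j x).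
Proof.
move=> hF hn; elim: r => [|j r IH].
  have -> : (fun y => \prod_(j <- [::]) F j y) = cst 1 by apply/funext => y; rewrite big_nil.
  by rewrite !big_nil mulr0; exact: is_derive_cst.
have -> : (fun y => \prod_(i <- j :: r) F i y) = F j * (fun y => \prod_(i <- r) F i y).
  by apply/funext => y; rewrite big_cons.
apply: is_derive_eq.
rewrite !big_cons /=; have := hn j; move: (F j x) (dF j) => a b an.
set Q := \prod_(j <- r) F j x; set T := \sum_(j <- r) _.
rewrite /GRing.scale /=; field; exact: an.
Qed.

Lemma D_ln (f : V -> R) x v : differentiable f x -> 0 < f x ->
  'D_v (fun y => ln (f y)) x = 'D_v f x / f x.
Proof.
move=> df fx.
have dln : differentiable (@ln R) (f x).
  apply/derivable1_diffP; exact: (@ex_derive _ _ _ _ _ _ _ (is_derive1_ln fx)).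
have -> : (fun y => ln (f y)) = (@ln R) \o f by [].
rewrite deriveE; last exact: differentiable_comp.
rewrite diff_comp //= -(deriveE _ df).
set z := 'D_v f x.
have e : 'd (@ln R) (f x) z = z *: 'd (@ln R) (f x) 1.
  by rewrite -linearZ /= (_ : z%:A = z) // /GRing.scale /= mulr1.
rewrite e -(deriveE _ dln).
by rewrite (@derive_val _ _ _ _ _ _ _ (is_derive1_ln fx)) [z *: _]/(z * _).
Qed.

End Deriv.

Lemma part_i (R : realType) (S A O : finType) (n : nat)
  (mu : S -> R) (P : S -> A -> S -> R) (Ob : S -> O -> R)
  (I : Type) (info : 'I_n -> {ffun 'I_n.+1 -> O} -> {ffun 'I_n -> A} -> I)
  (bel : 'I_n.+1 -> {ffun 'I_n.+1 -> O} -> {ffun 'I_n -> A} -> {ffun S -> R})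
  (k : nat) (Theta : set 'rV[R]_k) (pi : 'rV[R]_k -> I -> A -> R) :
     (forall theta, Theta theta -> forall i a,
        differentiable (fun th => pi th i a) theta /\ 0 < pi theta i a) ->
     forall theta, Theta theta ->
       differentiable (fun th => MBE mu P Ob info bel (pi th)) theta /\
       forall v : 'rV[R]_k,
         'D_v (fun th => MBE mu P Ob info bel (pi th)) theta =
         \sum_(ss : {ffun 'I_n.+1 -> S}) \sum_(os : {ffun 'I_n.+1 -> O})
         \sum_(as_ : {ffun 'I_n -> A})
           traj_prob mu P Ob info (pi theta) ss os as_ *
           \sum_(st : {ffun 'I_n.+1 -> S})
             believed_prob (bel_traj bel os as_) st *
             ((\sum_(t < n) 'D_v (fun th => ln (pi th (info t os as_) (as_ t))) theta)
              * entropy (@empirical R _ _ st)).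
Proof.
move=> hd theta hth; have hd' := hd theta hth.
pose C (ss : {ffun 'I_n.+1 -> S}) (os : {ffun 'I_n.+1 -> O}) (as_ : {ffun 'I_n -> A}) :=
  mu (ss ord0) * (\prod_(t < n.+1) Ob (ss t) (os t)) *
  \prod_(t < n) P (ss (tcur t)) (as_ t) (ss (tnext t)).
pose Hb os as_ := Hbar (bel_traj bel os as_).
have tpE : forall th ss os as_, traj_prob mu P Ob info (pi th) ss os as_ =
    C ss os as_ * \prod_(t < n) pi th (info t os as_) (as_ t).
  by move=> th ss os as_; rewrite /traj_prob big_split /= /C; ring.
have fE : (fun th => MBE mu P Ob info bel (pi th)) =
   (fun th => \sum_ss \sum_os \sum_as_
      (C ss os as_ * \prod_(t < n) pi th (info t os as_) (as_ t)) * Hb os as_).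
  apply/funext => th; rewrite /MBE; apply: eq_bigr => ss _; apply: eq_bigr => os _.
  by apply: eq_bigr => as_ _; rewrite tpE.
have fE2 : forall ss os as_, (fun th => (C ss os as_ * \prod_(t < n) pi th (info t os as_) (as_ t)) * Hb os as_)
   = (cst (C ss os as_) * (fun th => \prod_(t < n) pi th (info t os as_) (as_ t))) * cst (Hb os as_).
  by move=> ss os as_; apply/funext.
rewrite fE; split.
  apply: diff_sum_seq => ss; apply: diff_sum_seq => os; apply: diff_sum_seq => as_.
  rewrite fE2; apply: differentiableM; last exact: differentiable_cst.
  apply: differentiableM; first exact: differentiable_cst.
  by apply: diff_prod_seq => t; case: (hd' (info t os as_) (as_ t)).
move=> v.
pose df t os as_ := 'D_v (fun th => pi th (info t os as_) (as_ t)) theta.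
have hder : is_derive theta v (fun th => \sum_ss \sum_os \sum_as_
      (C ss os as_ * \prod_(t < n) pi th (info t os as_) (as_ t)) * Hb os as_)
   (\sum_ss \sum_os \sum_as_ (C ss os as_ * (\prod_(t < n) pi theta (info t os as_) (as_ t) *
       \sum_(t < n) df t os as_ / pi theta (info t os as_) (as_ t))) * Hb os as_).
  apply: is_derive_sum_seq => ss; apply: is_derive_sum_seq => os; apply: is_derive_sum_seq => as_.
  rewrite fE2.
  have hp := @is_derive_prod_seq R _ _ (index_enum 'I_n)
    (fun t th => pi th (info t os as_) (as_ t)) (fun t => df t os as_) theta v.
  have hp' := hp (fun t => derivableP (diff_derivable (v := v) (proj1 (hd' (info t os as_) (as_ t)))))
    (fun t => lt0r_neq0 (proj2 (hd' (info t os as_) (as_ t)))).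
  apply: is_derive_eq.
  by rewrite /GRing.scale /=; ring.
rewrite (@derive_val _ _ _ _ _ _ _ hder).
apply: eq_bigr => ss _; apply: eq_bigr => os _; apply: eq_bigr => as_ _.
have lnE : forall t, 'D_v (fun th => ln (pi th (info t os as_) (as_ t))) theta =
    df t os as_ / pi theta (info t os as_) (as_ t).
  move=> t; exact: (@D_ln _ _ (fun th => pi th (info t os as_) (as_ t)) theta v
     (proj1 (hd' _ _)) (proj2 (hd' _ _))).
set Sd := \sum_(t < n) df t os as_ / pi theta (info t os as_) (as_ t).
transitivity (traj_prob mu P Ob info (pi theta) ss os as_ *
   \sum_st believed_prob (bel_traj bel os as_) st * (Sd * entropy (@empirical R _ _ st))); last first.
  congr (_ * _); apply: eq_bigr => st _; congr (_ * (_ * _)).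
  by apply: eq_bigr => t _; symmetry; exact: lnE.
have -> : \sum_st believed_prob (bel_traj bel os as_) st * (Sd * entropy (@empirical R _ _ st)) =
    Sd * Hb os as_.
  by rewrite /Hb /Hbar mulr_sumr; apply: eq_bigr => st _; ring.
rewrite tpE; ring.
Qed.

Theorem theorem3 (R : realType) (S A O : finType) (n : nat)
  (mu : S -> R) (P : S -> A -> S -> R) (Ob : S -> O -> R)
  (I : Type) (info : 'I_n -> {ffun 'I_n.+1 -> O} -> {ffun 'I_n -> A} -> I)
  (bel : 'I_n.+1 -> {ffun 'I_n.+1 -> O} -> {ffun 'I_n -> A} -> {ffun S -> R}) :
  is_dist mu ->
  (forall s a, is_dist (P s a)) ->
  (forall s, is_dist (Ob s)) ->
  causal_info info ->
  causal_belief bel ->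
  (forall t os as_, is_dist (bel t os as_)) ->
  (* (i) policy gradient *)
  (forall (k : nat) (Theta : set 'rV[R]_k) (pi : 'rV[R]_k -> I -> A -> R),
     open Theta ->
     (forall theta, Theta theta -> forall i, is_dist (pi theta i)) ->
     (forall theta, Theta theta -> forall i a,
        differentiable (fun th => pi th i a) theta /\ 0 < pi theta i a) ->
     forall theta, Theta theta ->
       differentiable (fun th => MBE mu P Ob info bel (pi th)) theta /\
       forall v : 'rV[R]_k,
         'D_v (fun th => MBE mu P Ob info bel (pi th)) theta =
         \sum_(ss : {ffun 'I_n.+1 -> S}) \sum_(os : {ffun 'I_n.+1 -> O})
         \sum_(as_ : {ffun 'I_n -> A})
           traj_prob mu P Ob info (pi theta) ss os as_ *
           \sum_(st : {ffun 'I_n.+1 -> S})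
             believed_prob (bel_traj bel os as_) st *
             ((\sum_(t < n) 'D_v (fun th => ln (pi th (info t os as_) (as_ t))) theta)
              * entropy (@empirical R _ _ st))) /\
  (* (ii) Lipschitz-type bound *)
  (forall (pi1 pi2 : I -> A -> R)
          (Bstar : {ffun 'I_n.+1 -> {ffun S -> R}}),
     (forall i, is_dist (pi1 i)) -> (forall i, is_dist (pi2 i)) ->
     TB mu P Ob info bel pi1 pi2 Bstar ->
     (forall B, TB mu P Ob info bel pi1 pi2 B -> Hbar B <= Hbar Bstar) ->
     `|MBE mu P Ob info bel pi1 - MBE mu P Ob info bel pi2|
       <= n.+1%:R * Hbar Bstar * dTV_pol pi1 pi2).
Proof.
move=> hmu hP hO ci hb hbel; split.
  move=> k Theta pi _ _ hd theta hth; exact: (part_i mu P Ob info bel hd hth).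
exact: (part_ii hmu hP hO ci hbel).
Qed.
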